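(* A real Lie algebra $\mathfrak n$ is $\mathfrak k$-nilpotent with $\mathfrak k$ abelian if and only if it admits a basis $\{z_1,\dots,z_r,e_1,\dots,e_{2m}\}$ such that the only non-zero Lie brackets are $$[e_{2j-1},e_{2j}]=\sum_{i=1}^r\lambda^i_j z_i,\qquad j=1,\dots,m,$$ for some coefficients $\lambda^i_j\in\mathbb R$ with $(\lambda^1_j,\dots,\lambda^r_j)\neq0$ for every $1\le j\le m$.
   Context: Let $\mathfrak k$ be a compact Lie algebra with a bi-invariant Euclidean scalar product $\langle\cdot,\cdot\rangle_{\mathfrak k}$ and $\varphi:\mathfrak k\to\mathfrak u(V,I,\langle\cdot,\cdot\rangle_V)$ a finite-dimensional unitary representation on a Hermitian vector space $(V,I,\langle\cdot,\cdot\rangle_V)$ without trivial submodules. The associated $\mathfrak k$-nilpotent Lie algebra is the vector space $\mathfrak n=\mathfrak k+V$ with the bracket whose only non-zero components are $[v_1,v_2]\in\mathfrak k$ for $v_1,v_2\in V$, determined by $\langle[v_1,v_2],K\rangle_{\mathfrak k}=\langle\varphi(K)v_1,v_2\rangle_V$ for all $K\in\mathfrak k$. A Lie algebra is $\mathfrak k$-nilpotent if it is (isomorphic to) one arising in this way from some such data. *)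

(* Defs.v *)
From HB Require Import structures.
From mathcomp Require Import all_boot all_order all_algebra.
From mathcomp Require Import reals.
Set Implicit Arguments.
Unset Strict Implicit.
Unset Printing Implicit Defensive.
Import Order.TTheory GRing.Theory Num.Theory.
Local Open Scope ring_scope.

Definition lie_bracket (R : nzRingType) (L : lmodType R) (br : L -> L -> L) : Prop :=
  [/\ (forall (a : R) (x y z : L), br (a *: x + y) z = a *: br x z + br y z),
      (forall (a : R) (x y z : L), br x (a *: y + z) = a *: br x y + br x z),
      (forall x : L, br x x = 0) &
      (forall x y z : L, br x (br y z) + br y (br z x) + br z (br x y) = 0)].

Definition euclidean_product (R : realType) (U : lmodType R) (g : U -> U -> R) : Prop :=
  [/\ (forall (a : R) (u v w : U), g (a *: u + v) w = a * g u w + g v w),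
      (forall u v : U, g u v = g v u) &
      (forall u : U, u != 0 -> 0 < g u u)].

(* The data defining a k-nilpotent Lie algebra, with k = R^p (as a vector
   space) carrying the Lie bracket brk and the bi-invariant scalar product gk,
   V = R^q (as a real vector space) carrying the complex structure I and the
   real scalar product gV making (V, I, gV) a Hermitian vector space, and the
   unitary representation phi (phi K acts on row vectors by v |-> v *m phi K),
   without trivial submodules.  beta is the bracket V x V -> k defined by
   gk (beta v1 v2) K = gV (phi(K) v1) v2. *)
Definition knil_data (R : realType) (p q : nat)
    (brk : 'rV[R]_p -> 'rV[R]_p -> 'rV[R]_p) (gk : 'rV[R]_p -> 'rV[R]_p -> R)
    (I : 'M[R]_q) (gV : 'rV[R]_q -> 'rV[R]_q -> R) (phi : 'rV[R]_p -> 'M[R]_q)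
    (beta : 'rV[R]_q -> 'rV[R]_q -> 'rV[R]_p) : Prop :=
  [/\
      [/\ lie_bracket brk, euclidean_product gk &
          (forall K L M, gk (brk K L) M + gk L (brk K M) = 0)],
      [/\ I *m I = - 1%:M, euclidean_product gV &
          (forall v w, gV (v *m I) (w *m I) = gV v w)],
      [/\ (forall (a : R) K L, phi (a *: K + L) = a *: phi K + phi L),
          (forall K L (v : 'rV[R]_q), v *m phi (brk K L)
                         = (v *m phi L) *m phi K - (v *m phi K) *m phi L),
          (forall K, phi K *m I = I *m phi K) &
          (forall K v w, gV (v *m phi K) w + gV v (w *m phi K) = 0)],
      (forall W : {vspace 'rV[R]_q},
          (forall w, w \in W -> w *m I \in W) ->
          (forall K w, w \in W -> w *m phi K = 0) -> W = 0%VS) &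
      (forall v1 v2 K, gk (beta v1 v2) K = gV (v1 *m phi K) v2)].

(* The Lie algebra (L, br) is k-nilpotent with k abelian: it is isomorphic
   to n = k + V with bracket [K1 + v1, K2 + v2] = beta v1 v2, for some data
   as above with k abelian. *)
Definition knilpotent_abelian (R : realType) (L : vectType R) (br : L -> L -> L) : Prop :=
  exists (p q : nat) (brk : 'rV[R]_p -> 'rV[R]_p -> 'rV[R]_p)
         (gk : 'rV[R]_p -> 'rV[R]_p -> R) (I : 'M[R]_q)
         (gV : 'rV[R]_q -> 'rV[R]_q -> R) (phi : 'rV[R]_p -> 'M[R]_q)
         (beta : 'rV[R]_q -> 'rV[R]_q -> 'rV[R]_p)
         (fk : {linear 'rV[R]_p -> L}) (fV : {linear 'rV[R]_q -> L}),
    [/\ knil_data brk gk I gV phi beta,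
        (forall K1 K2, brk K1 K2 = 0),
        bijective (fun kv : 'rV[R]_p * 'rV[R]_q => fk kv.1 + fV kv.2) &
        (forall K1 v1 K2 v2,
            br (fk K1 + fV v1) (fk K2 + fV v2) = fk (beta v1 v2))].

(* Main.v *)
Require Import Defs.
From HB Require Import structures.
From mathcomp Require Import all_boot all_order all_algebra.
From mathcomp Require Import reals.
From mathcomp Require Import ring lra.
From mathcomp Require complex.
From Stdlib Require Import Classical.
Import Order.TTheory GRing.Theory Num.Theory.
Local Open Scope ring_scope.
Set Implicit Arguments.
Unset Strict Implicit.
Unset Printing Implicit Defensive.

Module CX.
Import complex.

Lemma common_eigen_sub {C : numClosedFieldType} n (U : 'M[C]_n) (As : seq 'M[C]_n) :
  U != 0 -> all (fun A => stablemx U A) As -> {in As &, forall A B, comm_mx A B} ->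
  exists v : 'rV_n, [/\ (v <= U)%MS, v != 0 & all (fun A => stablemx v A) As].
Proof.
move=> U0 /allP sU cAs.
have [] := @common_eigenvector C _ [seq restrictmx U B | B <- As].
- by rewrite lt0n mxrank_eq0.
- move=> _ _ /mapP[B B_in ->] /mapP[B' B'_in ->].
  rewrite /comm_mx -!conjmxM ?inE ?stablemx_row_base ?sU //.
  by rewrite (cAs B B').
move=> v vN0 /allP vP; exists (v *m row_base U); split.
- by rewrite mulmx_sub // eq_row_base.
- by rewrite mulmx_free_eq0 ?row_base_free.
apply/allP => B B_in; rewrite -stablemx_restrict ?sU //.
by apply: vP; apply/mapP; exists B.
Qed.
Section Eucl.
Variables (R : realType) (U : lmodType R) (g : U -> U -> R).
Hypothesis hg : euclidean_product g.

Lemma gDl u v w : g (u + v) w = g u w + g v w.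
Proof. by have [h _ _] := hg; have := h 1 u v w; rewrite scale1r mul1r. Qed.
Lemma g0l w : g 0 w = 0.
Proof.
have [h _ _] := hg; have := h 1 0 0 w; rewrite scale1r addr0 mul1r => e.
by apply: (@addrI _ (g 0 w)); rewrite addr0 -e.
Qed.
Lemma gZl a u w : g (a *: u) w = a * g u w.
Proof. by have [h _ _] := hg; have := h a u 0 w; rewrite addr0 g0l addr0. Qed.
Lemma gC u v : g u v = g v u.
Proof. by have [_ h _] := hg. Qed.
Lemma gDr u v w : g w (u + v) = g w u + g w v.
Proof. by rewrite gC gDl !(gC w). Qed.
Lemma gZr a u w : g w (a *: u) = a * g w u.
Proof. by rewrite gC gZl gC. Qed.
Lemma g0r w : g w 0 = 0.
Proof. by rewrite gC g0l. Qed.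
Lemma gNl u w : g (- u) w = - g u w.
Proof. by rewrite -scaleN1r gZl mulN1r. Qed.
Lemma gNr u w : g w (- u) = - g w u.
Proof. by rewrite gC gNl gC. Qed.
Lemma gBl u v w : g (u - v) w = g u w - g v w.
Proof. by rewrite gDl gNl. Qed.
Lemma gBr u v w : g w (u - v) = g w u - g w v.
Proof. by rewrite gDr gNr. Qed.
Lemma gsuml I (r : seq I) P (F : I -> U) w :
  g (\sum_(i <- r | P i) F i) w = \sum_(i <- r | P i) g (F i) w.
Proof. by elim/big_rec2: _ => [|i x y _ <-]; rewrite ?g0l ?gDl. Qed.
Lemma gsumr I (r : seq I) P (F : I -> U) w :
  g w (\sum_(i <- r | P i) F i) = \sum_(i <- r | P i) g w (F i).
Proof. by rewrite gC gsuml; apply: eq_bigr => i _; rewrite gC. Qed.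
Lemma gpos u : u != 0 -> 0 < g u u.
Proof. by have [_ _ h] := hg; apply: h. Qed.
Lemma gge0 u : 0 <= g u u.
Proof. by have [->|/gpos/ltW//] := eqVneq u 0; rewrite g0l. Qed.
Lemma geq0 u : g u u = 0 -> u = 0.
Proof. by have [//|/gpos] := eqVneq u 0; move=> h e; rewrite e ltxx in h. Qed.
Lemma gpos2 a b : (a != 0) || (b != 0) -> 0 < g a a + g b b.
Proof.
case/orP=> h.
  by rewrite ltr_wpDr ?gge0 ?gpos.
by rewrite ltr_wpDl ?gge0 ?gpos.
Qed.
End Eucl.

Section Cx.
Variable R : realType.
Local Notation C := (R[i]).
Local Notation f := (real_complex R).
Local Notation cRe := (@complex.Re R).
Local Notation cIm := (@complex.Im R).

Lemma ReD (x y : C) : cRe (x + y) = cRe x + cRe y. Proof. by case: x; case: y. Qed.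
Lemma ImD (x y : C) : cIm (x + y) = cIm x + cIm y. Proof. by case: x; case: y. Qed.
Lemma Re0 : cRe (0 : C) = 0. Proof. by []. Qed.
Lemma Im0 : cIm (0 : C) = 0. Proof. by []. Qed.
Lemma ReMr (x : C) r : cRe (x * f r) = cRe x * r.
Proof. by case: x => a b /=; rewrite mulr0 subr0. Qed.
Lemma ImMr (x : C) r : cIm (x * f r) = cIm x * r.
Proof. by case: x => a b /=; rewrite mulr0 add0r. Qed.
Lemma ReM (x y : C) : cRe (x * y) = cRe x * cRe y - cIm x * cIm y.
Proof. by case: x; case: y. Qed.
Lemma ImM (x y : C) : cIm (x * y) = cRe x * cIm y + cIm x * cRe y.
Proof. by case: x => a b; case: y => c d /=; rewrite addrC. Qed.
Lemma Re_sum I (r : seq I) P (F : I -> C) :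
  cRe (\sum_(i <- r | P i) F i) = \sum_(i <- r | P i) cRe (F i).
Proof. by elim/big_rec2: _ => [|i x y _ <-]; rewrite ?ReD. Qed.
Lemma Im_sum I (r : seq I) P (F : I -> C) :
  cIm (\sum_(i <- r | P i) F i) = \sum_(i <- r | P i) cIm (F i).
Proof. by elim/big_rec2: _ => [|i x y _ <-]; rewrite ?ImD. Qed.

Lemma Re_mulmx m n (x : 'rV[C]_m) (W : 'M[R]_(m, n)) :
  map_mx cRe (x *m map_mx f W) = map_mx cRe x *m W.
Proof.
apply/rowP => j; rewrite !mxE Re_sum; apply: eq_bigr => k _.
by rewrite !mxE ReMr.
Qed.
Lemma Im_mulmx m n (x : 'rV[C]_m) (W : 'M[R]_(m, n)) :
  map_mx cIm (x *m map_mx f W) = map_mx cIm x *m W.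
Proof.
apply/rowP => j; rewrite !mxE Im_sum; apply: eq_bigr => k _.
by rewrite !mxE ImMr.
Qed.
Lemma Re_scale n (mu : C) (v : 'rV[C]_n) :
  map_mx cRe (mu *: v) = cRe mu *: map_mx cRe v - cIm mu *: map_mx cIm v.
Proof. by apply/rowP => j; rewrite !mxE ReM. Qed.
Lemma Im_scale n (mu : C) (v : 'rV[C]_n) :
  map_mx cIm (mu *: v) = cIm mu *: map_mx cRe v + cRe mu *: map_mx cIm v.
Proof. by apply/rowP => j; rewrite !mxE ImM addrC. Qed.
Lemma ReIm_eq0 n (v : 'rV[C]_n) :
  map_mx cRe v = 0 -> map_mx cIm v = 0 -> v = 0.
Proof.
move=> /rowP h1 /rowP h2; apply/rowP => j; have := h1 j; have := h2 j.
rewrite !mxE; case: (v 0 j) => a b /= -> -> //.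
Qed.
End Cx.

Section RealEigen.
Variables (R : realType) (q : nat) (gV : 'rV[R]_q -> 'rV[R]_q -> R).
Hypothesis hg : euclidean_product gV.
Local Notation f := (real_complex R).
Local Notation cRe := (@complex.Re R).
Local Notation cIm := (@complex.Im R).

Lemma skew_s (A : 'M[R]_q) (a b : 'rV_q) s t :
  (forall w, gV (w *m A) w = 0) -> (a != 0) || (b != 0) ->
  a *m A = s *: a - t *: b -> b *m A = t *: a + s *: b -> s = 0.
Proof.
move=> sk ab ea eb.
have h1 := sk a; have h2 := sk b.
rewrite ea gBl // !gZl // in h1; rewrite eb gDl // !gZl // in h2.
have : s * (gV a a + gV b b) = 0.
  transitivity ((s * gV a a - t * gV b a) + (t * gV a b + s * gV b b)).
    by rewrite (gC hg b a); ring.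
  by rewrite h1 h2 addr0.
by move/eqP; rewrite mulf_eq0 (gt_eqF (gpos2 hg ab)) orbF => /eqP.
Qed.

Lemma cone (c : R) (u : 'rV[R]_q) : u != 0 -> - u = - c *: u -> c = 1.
Proof.
move=> nz e; have: (c - 1) *: u = 0.
  by rewrite scalerBl scale1r -[c *: u]opprK -scaleNr -e opprK subrr.
by move/eqP; rewrite scaler_eq0 (negPf nz) orbF subr_eq0 => /eqP.
Qed.

Lemma real_eigen (W I : 'M[R]_q) (As : seq 'M[R]_q) :
  W != 0 -> stablemx W I -> (forall A, A \in As -> stablemx W A) ->
  I *m I = -1%:M ->
  (forall A B, A \in I :: As -> B \in I :: As -> A *m B = B *m A) ->
  (forall v, gV (v *m I) v = 0) -> (forall A v, A \in As -> gV (v *m A) v = 0) ->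
  exists u : 'rV_q, [/\ (u <= W)%MS, u != 0 &
                forall A, A \in As -> exists a, u *m A = a *: (u *m I)].
Proof.
move=> W0 sWI sWA II hc skI skA.
have [|||v [vW v0 vst]] := @common_eigen_sub _ _ (map_mx f W) (map (map_mx f) (I :: As)).
- by rewrite map_mx_eq0.
- apply/allP => _ /mapP[A Ain ->]; rewrite -map_mxM map_submx.
  by move: Ain; rewrite inE => /orP[/eqP->|/sWA].
- move=> _ _ /mapP[A hA ->] /mapP[B hB ->]; by rewrite /comm_mx -!map_mxM (hc A B).
pose a := map_mx cRe v; pose b := map_mx cIm v.
have [x vx] := submxP vW.
have aW : (a <= W)%MS by rewrite /a vx Re_mulmx submxMl.
have bW : (b <= W)%MS by rewrite /b vx Im_mulmx submxMl.
have ab : (a != 0) || (b != 0).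
  apply/negPn/negP => /norP[/negPn/eqP a0 /negPn/eqP b0].
  by move: v0; rewrite (ReIm_eq0 a0 b0) eqxx.
have eig A : A \in I :: As -> exists s t,
    a *m A = s *: a - t *: b /\ b *m A = t *: a + s *: b.
  move=> Ain; have /allP/(_ (map_mx f A)) := vst.
  case/(_ (map_f _ Ain))/sub_rVP => mu e.
  exists (cRe mu), (cIm mu); split.
    by rewrite /a -Re_mulmx e Re_scale.
  by rewrite /b -Im_mulmx e Im_scale.
have [s [t [ea eb]]] := eig I (mem_head _ _).
have s0 := skew_s skI ab ea eb; rewrite s0 !scale0r ?add0r ?addr0 ?sub0r in ea eb.
have tt1 : t * t = 1.
  have e1 : a *m I *m I = - (t * t) *: a.
    by rewrite ea mulNmx -scalemxAl eb scalerA scaleNr.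
  have e2 : b *m I *m I = - (t * t) *: b.
    by rewrite eb -scalemxAl ea scalerN scalerA scaleNr.
  rewrite -!mulmxA II mulmxN mulmx1 in e1; rewrite -!mulmxA II mulmxN mulmx1 in e2.
  by move: ab => /orP[] nz; [apply: (cone nz e1) | apply: (cone nz e2)].
have bI : b = - t *: (a *m I) by rewrite ea scalerN scaleNr opprK scalerA tt1 scale1r.
have aI : a = t *: (b *m I) by rewrite eb scalerA tt1 scale1r.
have key A : A \in As -> exists c, a *m A = c *: (a *m I) /\ b *m A = c *: (b *m I).
  move=> Ain; have Ain2 : A \in I :: As by rewrite inE Ain orbT.
  have [s' [t' [ea' eb']]] := eig A Ain2.
  have s0' := skew_s (skA A ^~ Ain) ab ea' eb'.
  rewrite s0' !scale0r ?add0r ?addr0 ?sub0r in ea' eb'.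
  exists (t' * t); split.
    by rewrite ea' bI scalerA mulrN scaleNr opprK.
  by rewrite eb' {1}aI scalerA.
move: ab => /orP[] nz.
  exists a; split => // A /key [c [h _]]; by exists c.
exists b; split => // A /key [c [_ h]]; by exists c.
Qed.
End RealEigen.

End CX.
Import CX.

Section Basis3.
Variables (R : fieldType) (L : vectType R) (r m : nat).
Variables (z : 'I_r -> L) (x y : 'I_m -> L).

Definition X3 := [seq z i | i <- enum 'I_r] ++ [seq x j | j <- enum 'I_m]
                         ++ [seq y j | j <- enum 'I_m].
Definition comb3 (a : 'I_r -> R) (b c : 'I_m -> R) :=
  \sum_i a i *: z i + \sum_j b j *: x j + \sum_j c j *: y j.

Definition T3 : (r + (m + m)).-tuple L :=
  [tuple of [tuple z i | i < r] ++ [tuple of [tuple x j | j < m] ++ [tuple y j | j < m]]].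

Lemma T3E : val T3 = X3.
Proof. by rewrite /= /X3 enumT unlock. Qed.

Lemma sumT3 (k : 'I_(r + (m + m)) -> R) :
  \sum_i k i *: T3`_i = comb3 (fun i => k (lshift _ i))
     (fun j => k (rshift r (lshift m j))) (fun j => k (rshift r (rshift m j))).
Proof.
rewrite big_split_ord big_split_ord /comb3 /= -/T3 addrA.
congr (_ + _ + _); apply: eq_bigr => i _; congr (_ *: _) => /=.
- by rewrite nth_cat size_map size_enum_ord ltn_ord (nth_map i) ?size_enum_ord // nth_ord_enum.
- rewrite nth_cat size_map size_enum_ord ltnNge leq_addr /= addKn.
  by rewrite nth_cat size_map size_enum_ord ltn_ord (nth_map i) ?size_enum_ord // nth_ord_enum.
- rewrite nth_cat size_map size_enum_ord ltnNge leq_addr /= addKn.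
  rewrite nth_cat size_map size_enum_ord ltnNge leq_addr /= addKn.
  by rewrite (nth_map i) ?size_enum_ord // nth_ord_enum.
Qed.

Lemma span3 l : l \in <<X3>>%VS <-> exists a b c, l = comb3 a b c.
Proof.
split.
  rewrite -T3E => /coord_span ->; rewrite sumT3.
  by do 3 eexists.
case=> a [b [c ->]]; rewrite /comb3.
have memX u : u \in X3 -> u \in <<X3>>%VS by move/memv_span.
rewrite !memvD // memv_suml // => i _; rewrite memvZ // memX //.
- by rewrite /X3 !mem_cat map_f ?mem_enum.
- by rewrite /X3 !mem_cat map_f ?mem_enum ?orbT.
- by rewrite /X3 !mem_cat map_f ?mem_enum ?orbT.
Qed.

Lemma free3 : free X3 <-> (forall a b c, comb3 a b c = 0 ->
   [/\ forall i, a i = 0, forall j, b j = 0 & forall j, c j = 0]).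
Proof.
rewrite -T3E; split.
  move/freeP => fr a b c e.
  pose k (i : 'I_(r + (m + m))) := match split i with
     | inl i1 => a i1 | inr i2 => match split i2 with inl j => b j | inr j => c j end end.
  have := fr k; rewrite sumT3 /k.
  have E : comb3 (fun i => k (lshift (m + m) i)) (fun j => k (rshift r (lshift m j)))
             (fun j => k (rshift r (rshift m j))) = comb3 a b c.
    by rewrite /k /comb3; congr (_ + _ + _); apply: eq_bigr => i _;
      rewrite ?(unsplitK (inl _ i)) ?(unsplitK (inr _ (lshift m i))) ?(unsplitK (inr _ (rshift m i)))
              ?(unsplitK (inl _ i)) ?(unsplitK (inr _ i)).
  have := fr k; rewrite sumT3 E => /(_ e) K0.
  split=> i.
  - by have := K0 (lshift _ i); rewrite /k (unsplitK (inl _ i)).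
  - by have := K0 (rshift r (lshift m i)); rewrite /k (unsplitK (inr _ (lshift m i))) (unsplitK (inl _ i)).
  - by have := K0 (rshift r (rshift m i)); rewrite /k (unsplitK (inr _ (rshift m i))) (unsplitK (inr _ i)).
move=> h; apply/freeP => k; rewrite sumT3 => /h [ha hb hc] i.
case: (splitP i) => [j eq|j eq].
  by have -> : i = lshift _ j by apply: val_inj.
case: (splitP j) => [j' eq'|j' eq'].
  by have -> : i = rshift r (lshift m j') by apply: val_inj; rewrite /= eq eq'.
by have -> : i = rshift r (rshift m j') by apply: val_inj; rewrite /= eq eq'.
Qed.


Lemma basis3 : basis_of fullv X3 <-> (forall l, exists a b c, l = comb3 a b c) /\
   (forall a b c, comb3 a b c = 0 ->
   [/\ forall i, a i = 0, forall j, b j = 0 & forall j, c j = 0]).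
Proof.
rewrite /basis_of; split.
  case/andP => /eqP sp /free3 fr; split => // l.
  by apply/span3; rewrite sp memvf.
case=> sp fr; apply/andP; split; last exact/free3.
rewrite eqEsubv subvf /=; apply/subvP => l _; exact/span3.
Qed.
End Basis3.

Lemma span2 (F : fieldType) (vT : vectType F) (u1 u2 w : vT) :
  w \in <<[:: u1; u2]>>%VS -> exists c1 c2, w = c1 *: u1 + c2 *: u2.
Proof.
rewrite span_def !big_cons big_nil addv0 => /memv_addP[w1 /vlineP[c1 ->] [w2 /vlineP[c2 ->] ->]].
by exists c1, c2.
Qed.

Section Fwd.
Variables (R : realType) (p q : nat) (brk : 'rV[R]_p -> 'rV[R]_p -> 'rV[R]_p)
  (gk : 'rV[R]_p -> 'rV[R]_p -> R) (I : 'M[R]_q) (gV : 'rV[R]_q -> 'rV[R]_q -> R)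
  (phi : 'rV[R]_p -> 'M[R]_q) (beta : 'rV[R]_q -> 'rV[R]_q -> 'rV[R]_p).
Hypothesis hd : knil_data brk gk I gV phi beta.
Hypothesis hab : forall K1 K2, brk K1 K2 = 0.

Lemma hgk : euclidean_product gk. Proof. by case: hd => [[_ h _] _ _ _ _]. Qed.
Lemma hgV : euclidean_product gV. Proof. by case: hd => [_ [_ h _] _ _ _]. Qed.
Lemma II : I *m I = - 1%:M. Proof. by case: hd => [_ [h _ _] _ _ _]. Qed.
Lemma herm v w : gV (v *m I) (w *m I) = gV v w. Proof. by case: hd => [_ [_ _ h] _ _ _]. Qed.
Lemma philin a K L : phi (a *: K + L) = a *: phi K + phi L.
Proof. by case: hd => [_ _ [h _ _ _] _ _]. Qed.
Lemma phi0 : phi 0 = 0.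
Proof.
have := philin 1 0 0; rewrite !scale1r addr0 => e.
by apply: (@addrI _ (phi 0)); rewrite addr0 -e.
Qed.
Lemma phi_sum K : phi K = \sum_i K 0 i *: phi 'e_i.
Proof.
rewrite {1}(row_sum_delta K).
by elim/big_rec2: _ => [|i y1 y2 _ <-]; [exact: phi0 | exact: philin].
Qed.
Lemma phicomm K L : phi K *m phi L = phi L *m phi K.
Proof.
case: hd => [_ _ [_ h _ _] _ _].
apply/row_matrixP => i; rewrite !rowE !mulmxA.
have := h L K 'e_i; rewrite hab phi0 mulmx0 => /eqP.
by rewrite eq_sym subr_eq0 => /eqP.
Qed.
Lemma phiI K : phi K *m I = I *m phi K. Proof. by case: hd => [_ _ [_ _ h _] _ _]. Qed.
Lemma phiskew K v w : gV (v *m phi K) w = - gV v (w *m phi K).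
Proof. by case: hd => [_ _ [_ _ _ h] _ _]; apply/eqP; rewrite -addr_eq0 h. Qed.
Lemma Iskew v w : gV (v *m I) w = - gV v (w *m I).
Proof. by rewrite -[in LHS](herm (v *m I) w) -mulmxA II mulmxN mulmx1 (gNl hgV). Qed.
Lemma self0 (A : 'M_q) v : (forall v w, gV (v *m A) w = - gV v (w *m A)) -> gV (v *m A) v = 0.
Proof. move=> h; have := h v v; rewrite (gC hgV v) => e; lra. Qed.
Lemma hbeta v1 v2 K : gk (beta v1 v2) K = gV (v1 *m phi K) v2.
Proof. by case: hd => [_ _ _ _ h]. Qed.
Lemma notriv (W : {vspace 'rV[R]_q}) :
  (forall w, w \in W -> w *m I \in W) -> (forall K w, w \in W -> w *m phi K = 0) -> W = 0%VS.
Proof. by case: hd => [_ _ _ h _]; apply: h. Qed.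
Lemma gk_nondeg b : (forall K, gk b K = 0) -> b = 0.
Proof. by move=> h; apply: (geq0 hgk); apply: h. Qed.
Lemma beta_anti v w : beta w v = - beta v w.
Proof.
apply/eqP; rewrite -addr_eq0; apply/eqP/gk_nondeg => K.
by rewrite (gDl hgk) !hbeta phiskew (gC hgV w) addNr.
Qed.
Lemma beta0l w : beta 0 w = 0.
Proof. by apply: gk_nondeg => K; rewrite hbeta mul0mx (g0l hgV). Qed.
Lemma beta0r w : beta w 0 = 0.
Proof. by rewrite beta_anti beta0l oppr0. Qed.

Lemma mulG n (f : 'I_n -> 'rV_q) u :
  u *m \matrix_(k, j) gV 'e_k (f j) = \row_j gV u (f j).
Proof.
apply/rowP => j; rewrite !mxE [in RHS](row_sum_delta u) (gsuml hgV).
by apply: eq_bigr => k _; rewrite mxE (gZl hgV).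
Qed.

Definition good m (x : 'I_m -> 'rV_q) :=
  [/\ forall i j, gV (x i) (x j) = (i == j)%:R,
      forall i j, gV (x i) (x j *m I) = 0 &
      forall i K, exists a, x i *m phi K = a *: (x i *m I)].
Definition spans m (x : 'I_m -> 'rV_q) := forall v,
  v = \sum_j gV v (x j) *: x j + \sum_j gV v (x j *m I) *: (x j *m I).

Lemma bound m (x : 'I_m -> 'rV_q) : good x -> (m <= q)%N.
Proof.
case=> h1 _ _.
pose Xm : 'M_(m, q) := \matrix_(i, k) x i 0 k.
have e : Xm *m \matrix_(k, j) gV 'e_k (x j) = 1%:M.
  apply/row_matrixP => i; rewrite row_mul.
  have -> : row i Xm = x i by apply/rowP => k; rewrite !mxE.
  by rewrite mulG; apply/rowP => j; rewrite !mxE h1 eq_sym.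
by rewrite -[m](@mxrank1 R) -e (leq_trans (mxrankM_maxl _ _)) // rank_leq_col.
Qed.

Lemma sum_delta m (c : 'I_m -> R) l : \sum_j c j * (j == l)%:R = c l.
Proof.
rewrite (bigD1 l) //= eqxx mulr1 big1 ?addr0 // => j /negPf ->.
by rewrite mulr0.
Qed.


Definition Wc m (x : 'I_m -> 'rV_q) : 'M_q :=
  kermx (row_mx (\matrix_(k, j) gV 'e_k (x j)) (\matrix_(k, j) gV 'e_k (x j *m I))).

Lemma Wc_mem m (x : 'I_m -> 'rV_q) u :
  (u <= Wc x)%MS <-> (forall j, gV u (x j) = 0 /\ gV u (x j *m I) = 0).
Proof.
rewrite /Wc; split.
  move/sub_kermxP; rewrite mul_mx_row !mulG => /eqP; rewrite row_mx_eq0.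
  case/andP => /eqP/rowP e1 /eqP/rowP e2 j.
  by have := e1 j; have := e2 j; rewrite !mxE => -> ->.
move=> h; apply/sub_kermxP; rewrite mul_mx_row !mulG.
apply/eqP; rewrite row_mx_eq0; apply/andP; split; apply/eqP/rowP => j;
  by rewrite !mxE; case: (h j).
Qed.

Lemma stable_of (W A : 'M[R]_q) : (forall u : 'rV_q, (u <= W)%MS -> (u *m A <= W)%MS) ->
  stablemx W A.
Proof. by move=> h; apply/row_subP => i; rewrite row_mul h // row_sub. Qed.

Lemma extend m (x : 'I_m -> 'rV_q) : good x -> ~ spans x ->
  exists x' : 'I_m.+1 -> 'rV_q, good x'.
Proof.
move=> gx nsp; have [g1 g2 g3] := gx.
have [v hv] := not_all_ex_not _ _ nsp.
pose rr := v - (\sum_j gV v (x j) *: x j + \sum_j gV v (x j *m I) *: (x j *m I)).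
have rr0 : rr != 0 by rewrite subr_eq0; apply/eqP.
have g2' i j : gV (x j *m I) (x i) = 0 by rewrite (gC hgV) g2.
have rW : (rr <= Wc x)%MS.
  apply/Wc_mem => l; rewrite /rr !(gBl hgV) !(gDl hgV) !(gsuml hgV); split.
    rewrite [X in _ - (_ + X)]big1 => [|j _]; last by rewrite (gZl hgV) g2' mulr0.
    rewrite (eq_bigr (fun j => gV v (x j) * (j == l)%:R)) => [|j _]; last by rewrite (gZl hgV) g1.
    by rewrite sum_delta addr0 subrr.
  rewrite [X in _ - (X + _)]big1 => [|j _]; last by rewrite (gZl hgV) g2 mulr0.
  rewrite (eq_bigr (fun j => gV v (x j *m I) * (j == l)%:R)) => [|j _]; last by rewrite (gZl hgV) herm g1.
  by rewrite sum_delta add0r subrr.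
have Wne : Wc x != 0.
  by apply: contra rr0 => /eqP W0; move: rW; rewrite W0 submx0.
have sI : stablemx (Wc x) I.
  apply: stable_of => u /Wc_mem h; apply/Wc_mem => j; have [h1 h2] := h j; split.
  - by rewrite Iskew h2 oppr0.
  - by rewrite herm h1.
have sA K : stablemx (Wc x) (phi K).
  apply: stable_of => u /Wc_mem h; apply/Wc_mem => j; have [h1 h2] := h j.
  have [a ea] := g3 j K; split.
  - by rewrite phiskew ea (gZr hgV) h2 mulr0 oppr0.
  - rewrite phiskew -mulmxA -phiI mulmxA ea -scalemxAl -mulmxA II mulmxN mulmx1.
    by rewrite scalerN (gNr hgV) (gZr hgV) h1 mulr0 !oppr0.
pose As := [seq phi 'e_i | i <- enum 'I_p].
have [||||u [uW u0 ue]] := @real_eigen _ _ _ hgV (Wc x) I As Wne sI _ II.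
- move=> A /mapP[i _ ->]; exact: sA.
- move=> A B; rewrite !inE => /orP[/eqP->|/mapP[i _ ->]] /orP[/eqP->|/mapP[j _ ->]] //;
    first [by rewrite phiI | exact: phicomm].
- by move=> w; apply: self0 => v' w'; exact: Iskew.
- by move=> A w /mapP[i _ ->]; apply: self0 => v' w'; exact: phiskew.
have hex : forall i : 'I_p, exists a : R, u *m phi 'e_i = a *: (u *m I).
  by move=> i; apply: ue; apply: map_f; exact: mem_enum.
have [al hal] := fin_all_exists hex.
have ueK K : u *m phi K = (\sum_i K 0 i * al i) *: (u *m I).
  rewrite phi_sum mulmx_sumr scaler_suml; apply: eq_bigr => i _.
  by rewrite -scalemxAr hal scalerA.
have gp := gpos hgV u0.
pose sq := Num.sqrt (gV u u).
have sq0 : 0 < sq by rewrite sqrtr_gt0.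
have sq2 : sq ^+ 2 = gV u u by rewrite sqr_sqrtr // ltW.
pose u' := sq^-1 *: u.
have u'1 : gV u' u' = 1.
  rewrite (gZl hgV) (gZr hgV) -sq2 mulrA -expr2 -exprMn mulVf ?expr1n //.
  by rewrite gt_eqF.
have u'W : (u' <= Wc x)%MS by rewrite scalemx_sub.
have u'e K : u' *m phi K = (\sum_i K 0 i * al i) *: (u' *m I).
  by rewrite -!scalemxAl ueK !scalerA mulrC.
have u'x j : gV u' (x j) = 0 /\ gV u' (x j *m I) = 0 by apply: (proj1 (Wc_mem x u') u'W).
have u'I : gV u' (u' *m I) = 0 by rewrite (gC hgV); apply: self0 => v' w'; exact: Iskew.
have u'Ix j : gV (u' *m I) (x j) = 0 by rewrite Iskew (u'x j).2 oppr0.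
pose x' (j : 'I_m.+1) := if unlift ord_max j is Some j' then x j' else u'.
have xl j : x' (lift ord_max j) = x j by rewrite /x' liftK.
have xm : x' ord_max = u' by rewrite /x' unlift_none.
exists x'; split.
- move=> i j; case: (unliftP ord_max i) => [i'|] ->; case: (unliftP ord_max j) => [j'|] ->;
    rewrite ?xl ?xm.
  + by rewrite g1 (inj_eq (@lift_inj _ ord_max)).
  + by rewrite (gC hgV) (u'x i').1 eq_sym (negPf (neq_lift _ _)).
  + by rewrite (u'x j').1 (negPf (neq_lift _ _)).
  + by rewrite eqxx u'1.
- move=> i j; case: (unliftP ord_max i) => [i'|] ->; case: (unliftP ord_max j) => [j'|] ->;
    rewrite ?xl ?xm.
  + exact: g2.
  + by rewrite (gC hgV) u'Ix.
  + exact: (u'x j').2.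
  + exact: u'I.
- move=> i K; case: (unliftP ord_max i) => [i'|] ->; rewrite ?xl ?xm; first exact: g3.
  by eexists; exact: u'e.
Qed.

Lemma exists_span : exists m (x : 'I_m -> 'rV_q), good x /\ spans x.
Proof.
have H k : (exists m (x : 'I_m -> 'rV_q), good x /\ spans x) \/
           (exists m (x : 'I_m -> 'rV_q), good x /\ (k <= m)%N).
  elim: k => [|k [IH|[m [x [gx km]]]]].
  - right; exists 0%N, (fun _ => 0); split => //; split=> [[]|[]|[]] //.
  - by left.
  - have [sp|nsp] := classic (spans x); first by left; exists m, x.
    have [x' gx'] := extend gx nsp; right; exists m.+1, x'; split => //.
have [//|[m [x [gx km]]]] := H q.+1.
by have := bound gx; rewrite leqNgt km.
Qed.


Lemma fwd (L : vectType R) (br : L -> L -> L)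
  (fk : {linear 'rV[R]_p -> L}) (fV : {linear 'rV[R]_q -> L}) :
  bijective (fun kv : 'rV[R]_p * 'rV[R]_q => fk kv.1 + fV kv.2) ->
  (forall K1 v1 K2 v2, br (fk K1 + fV v1) (fk K2 + fV v2) = fk (beta v1 v2)) ->
  exists (r m : nat) (z : 'I_r -> L) (x y : 'I_m -> L) (lam : 'I_r -> 'I_m -> R),
    [/\ basis_of fullv ([seq z i | i <- enum 'I_r] ++ [seq x j | j <- enum 'I_m]
                         ++ [seq y j | j <- enum 'I_m]),
        [/\ (forall i i', br (z i) (z i') = 0),
        (forall i j, [/\ br (z i) (x j) = 0, br (x j) (z i) = 0,
                         br (z i) (y j) = 0 & br (y j) (z i) = 0]) &
        (forall j j', br (x j) (x j') = 0 /\ br (y j) (y j') = 0)],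
        (forall j j', br (x j) (y j')
                      = if j == j' then \sum_(i < r) lam i j *: z i else 0),
        (forall j j', br (y j') (x j)
                      = if j == j' then - \sum_(i < r) lam i j *: z i else 0) &
        (forall j, exists i, lam i j != 0)].
Proof.
move=> [ginv hK hK'] hb.
have inj := can_inj hK.
have [m [x [[g1 g2 g3] sp]]] := exists_span.
pose zL i := fk 'e_i; pose xL j := fV (x j); pose yL j := fV (x j *m I).
pose lam i j := beta (x j) (x j *m I) 0 i.
exists p, m, zL, xL, yL, lam.
have zE i : zL i = fk 'e_i + fV 0 by rewrite linear0 addr0.
have xE j : xL j = fk 0 + fV (x j) by rewrite linear0 add0r.
have yE j : yL j = fk 0 + fV (x j *m I) by rewrite linear0 add0r.
have g2' i j : gV (x j *m I) (x i) = 0 by rewrite (gC hgV) g2.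
have xphiI j K : exists a, x j *m I *m phi K = - a *: x j.
  have [a ea] := g3 j K; exists a.
  by rewrite -mulmxA -phiI mulmxA ea -scalemxAl -mulmxA II mulmxN mulmx1 scalerN scaleNr.
have bxx j j' : beta (x j) (x j') = 0.
  apply: gk_nondeg => K; rewrite hbeta; have [a ->] := g3 j K.
  by rewrite (gZl hgV) g2' mulr0.
have byy j j' : beta (x j *m I) (x j' *m I) = 0.
  apply: gk_nondeg => K; rewrite hbeta; have [a ->] := xphiI j K.
  by rewrite (gZl hgV) g2 mulr0.
have bxy j j' : beta (x j) (x j' *m I) = if j == j' then beta (x j) (x j *m I) else 0.
  case: eqP => [->//|/eqP ne]; apply: gk_nondeg => K; rewrite hbeta.
  by have [a ->] := g3 j K; rewrite (gZl hgV) herm g1 (negPf ne) mulr0.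
have bsum j : fk (beta (x j) (x j *m I)) = \sum_i lam i j *: zL i.
  by rewrite {1}(row_sum_delta (beta _ _)) linear_sum; apply: eq_bigr => i _; rewrite linearZ.
split.
- apply: (proj2 (basis3 zL xL yL)); split.
    move=> l; have := hK' l; case: (ginv l) => K v /= <-.
    exists (fun i => K 0 i), (fun j => gV v (x j)), (fun j => gV v (x j *m I)).
    rewrite /comb3 {1}(row_sum_delta K) linear_sum {1}(sp v) linearD !linear_sum /= addrA.
    congr (_ + _ + _); apply: eq_bigr => i _; by rewrite linearZ.
  move=> a b c e.
  pose K := \row_i a i; pose v := \sum_j b j *: x j + \sum_j c j *: (x j *m I).
  have : (K, v) = (0, 0).
    apply: inj => /=; rewrite !linear0 addr0 -e /comb3 /v linearD !linear_sum addrA.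
    rewrite {1}(row_sum_delta K) linear_sum.
    congr (_ + _ + _); apply: eq_bigr => i _; by rewrite linearZ // mxE.
  case=> K0 v0; split.
  + by move=> i; have := congr1 (fun M : 'rV_p => M 0 i) K0; rewrite /= !mxE.
  + move=> l; have := congr1 (fun w => gV w (x l)) v0; rewrite /= (g0l hgV) /v (gDl hgV) !(gsuml hgV).
    rewrite [X in _ + X]big1 => [|j _]; last by rewrite (gZl hgV) g2' mulr0.
    rewrite (eq_bigr (fun j => b j * (j == l)%:R)) => [|j _]; last by rewrite (gZl hgV) g1.
    by rewrite sum_delta addr0.
  + move=> l; have := congr1 (fun w => gV w (x l *m I)) v0; rewrite /= (g0l hgV) /v (gDl hgV) !(gsuml hgV).
    rewrite [X in X + _]big1 => [|j _]; last by rewrite (gZl hgV) g2 mulr0.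
    rewrite (eq_bigr (fun j => c j * (j == l)%:R)) => [|j _]; last by rewrite (gZl hgV) herm g1.
    by rewrite sum_delta add0r.
- split.
  + by move=> i i'; rewrite !zE hb beta0l linear0.
  + move=> i j; rewrite zE xE yE; by split; rewrite hb ?beta0l ?beta0r linear0.
  + by move=> j j'; rewrite !xE !yE !hb bxx byy linear0.
- move=> j j'; rewrite xE yE hb bxy; case: eqP => [_|_]; first exact: bsum.
  exact: linear0.
- move=> j j'; rewrite xE yE hb beta_anti bxy; case: eqP => [_|_].
    by rewrite linearN bsum.
  by rewrite oppr0 linear0.
move=> j; apply: NNPP => /not_ex_all_not nl.
have l0 i : lam i j = 0 by apply/eqP/negPn/negP; exact: nl.
have b0 : beta (x j) (x j *m I) = 0 by apply/rowP => i; rewrite mxE; exact: l0.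
have xphi0 K : x j *m phi K = 0.
  have [a ea] := g3 j K; have := hbeta (x j) (x j *m I) K.
  rewrite b0 (g0l hgk) ea (gZl hgV) herm g1 eqxx mulr1 => a0.
  by rewrite -a0 scale0r.
have W0 := @notriv (<<[:: x j; x j *m I]>>%VS).
have xj0 : x j = 0.
  apply/eqP; rewrite -memv0 -W0; first by rewrite memv_span // inE eqxx.
    move=> w /span2 [c1 [c2 ->]]; rewrite mulmxDl -!scalemxAl -mulmxA II mulmxN mulmx1.
    rewrite memvD // memvZ // ?memvN // memv_span // !inE eqxx ?orbT //.
  move=> K w /span2 [c1 [c2 ->]]; rewrite mulmxDl -!scalemxAl xphi0 -mulmxA -phiI mulmxA xphi0.
  by rewrite mul0mx !scaler0 addr0.
by have := g1 j j; rewrite xj0 (g0l hgV) eqxx => /eqP; rewrite eq_sym oner_eq0.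
Qed.
End Fwd.

Section Bil.
Variables (R : realType) (L : vectType R) (br : L -> L -> L).
Hypothesis hbr : lie_bracket br.

Lemma brDl u v w : br (u + v) w = br u w + br v w.
Proof. by case: hbr => h _ _ _; rewrite -{1}[u]scale1r h scale1r. Qed.
Lemma br0l w : br 0 w = 0.
Proof.
have := brDl 0 0 w; rewrite addr0 => e.
by apply: (@addrI _ (br 0 w)); rewrite addr0 -e.
Qed.
Lemma brZl a u w : br (a *: u) w = a *: br u w.
Proof. by case: hbr => h _ _ _; have := h a u 0 w; rewrite addr0 br0l addr0. Qed.
Lemma brDr u v w : br w (u + v) = br w u + br w v.
Proof. by case: hbr => _ h _ _; rewrite -{1}[u]scale1r h scale1r. Qed.
Lemma br0r w : br w 0 = 0.
Proof.
have := brDr 0 0 w; rewrite addr0 => e.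
by apply: (@addrI _ (br w 0)); rewrite addr0 -e.
Qed.
Lemma brZr a u w : br w (a *: u) = a *: br w u.
Proof. by case: hbr => _ h _ _; have := h a w u 0; rewrite addr0 br0r addr0. Qed.
Lemma brsuml I (s : seq I) P (F : I -> L) w :
  br (\sum_(i <- s | P i) F i) w = \sum_(i <- s | P i) br (F i) w.
Proof. by elim/big_rec2: _ => [|i a b _ <-]; rewrite ?br0l ?brDl. Qed.
Lemma brsumr I (s : seq I) P (F : I -> L) w :
  br w (\sum_(i <- s | P i) F i) = \sum_(i <- s | P i) br w (F i).
Proof. by elim/big_rec2: _ => [|i a b _ <-]; rewrite ?br0r ?brDr. Qed.
End Bil.

Section Bwd1.
Variables (R : realType) (L : vectType R) (br : L -> L -> L).
Hypothesis hbr : lie_bracket br.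
Variables (r m : nat) (z : 'I_r -> L) (x y : 'I_m -> L) (lam : 'I_r -> 'I_m -> R).
Hypothesis hzz : forall i i', br (z i) (z i') = 0.
Hypothesis hzx : forall i j, [/\ br (z i) (x j) = 0, br (x j) (z i) = 0,
                         br (z i) (y j) = 0 & br (y j) (z i) = 0].
Hypothesis hxx : forall j j', br (x j) (x j') = 0 /\ br (y j) (y j') = 0.
Hypothesis hxy : forall j j', br (x j) (y j')
                      = if j == j' then \sum_(i < r) lam i j *: z i else 0.
Hypothesis hyx : forall j j', br (y j') (x j)
                      = if j == j' then - \sum_(i < r) lam i j *: z i else 0.

Definition S j := \sum_(i < r) lam i j *: z i.

Lemma sum_if (c : 'I_m -> R) (F : 'I_m -> L) l :
  \sum_j c j *: (if l == j then F l else 0) = c l *: F l.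
Proof.
rewrite (bigD1 l) //= eqxx big1 ?addr0 // => j /negPf; rewrite eq_sym => ->.
by rewrite scaler0.
Qed.

Lemma br_comb a b c a' b' c' :
  br (comb3 z x y a b c) (comb3 z x y a' b' c') =
  \sum_j (b j * c' j - c j * b' j) *: S j.
Proof.
have ez i : br (z i) (comb3 z x y a' b' c') = 0.
  rewrite /comb3 !(brDr hbr) !(brsumr hbr) !big1 ?addr0 // => j _;
    rewrite (brZr hbr); by [rewrite hzz scaler0 | case: (hzx i j) => -> _ _ _; rewrite scaler0
                                  | case: (hzx i j) => _ _ -> _; rewrite scaler0].
have ex j : br (x j) (comb3 z x y a' b' c') = c' j *: S j.
  rewrite /comb3 !(brDr hbr) !(brsumr hbr) big1 ?add0r => [|i _]; last first.
    by rewrite (brZr hbr); case: (hzx i j) => _ -> _ _; rewrite scaler0.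
  rewrite big1 ?add0r => [|i _]; last by rewrite (brZr hbr) (hxx j i).1 scaler0.
  under eq_bigr do rewrite (brZr hbr) hxy.
  exact: sum_if.
have ey j : br (y j) (comb3 z x y a' b' c') = - (b' j *: S j).
  rewrite /comb3 !(brDr hbr) !(brsumr hbr) big1 ?add0r => [|i _]; last first.
    by rewrite (brZr hbr); case: (hzx i j) => _ _ _ ->; rewrite scaler0.
  rewrite [X in _ + X]big1 ?addr0 => [|i _]; last by rewrite (brZr hbr) (hxx j i).2 scaler0.
  under eq_bigr do rewrite (brZr hbr) hyx.
  rewrite -scalerN -(sum_if b' (fun l => - S l) j); apply: eq_bigr => l _.
  by rewrite /S eq_sym; case: eqP => [->|].

rewrite {1}/comb3 !(brDl hbr) !(brsuml hbr) big1 ?add0r => [|i _]; last by rewrite (brZl hbr) ez scaler0.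
rewrite (eq_bigr (fun j => b j *: (c' j *: S j))) => [|j _]; last by rewrite (brZl hbr) ex.
rewrite [X in _ + X](eq_bigr (fun j => c j *: - (b' j *: S j))) => [|j _]; last by rewrite (brZl hbr) ey.
rewrite -big_split; apply: eq_bigr => j _ /=.
by rewrite scalerN !scalerA scalerBl.
Qed.
End Bwd1.

Section Dot.
Variable R : realType.
Definition dot n (u v : 'rV[R]_n) : R := (u *m v^T) 0 0.

Lemma dot_ep n : euclidean_product (@dot n).
Proof.
split.
- by move=> a u v w; rewrite /dot mulmxDl -scalemxAl !mxE.
- move=> u v; rewrite /dot !mxE; apply: eq_bigr => k _; by rewrite !mxE mulrC.
- move=> u u0; rewrite /dot mxE.
  case: (pickP (fun k => u 0 k != 0)) => [k hk | h]; last first.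
    have u00 : u = 0 by apply/rowP => k; rewrite mxE; apply/eqP/negbFE/h.
    by rewrite u00 eqxx in u0.
  rewrite (bigD1 k) //= mxE.
  have h1 : 0 < u 0 k * u 0 k by rewrite -expr2 exprn_even_gt0 //= hk.
  have h2 : 0 <= \sum_(i | i != k) u 0 i * u^T i 0.
    by apply: sumr_ge0 => i _; rewrite mxE -expr2 sqr_ge0.
  lra.
Qed.
End Dot.

Section Bwd2.
Variables (R : realType) (r m : nat) (lam : 'I_r -> 'I_m -> R).
Hypothesis hlam : forall j, exists i, lam i j != 0.

Definition Ic : 'M[R]_(m + m) := block_mx 0 1%:M (- 1%:M) 0.
Definition Dm (K : 'rV[R]_r) : 'M[R]_m := diag_mx (\row_j \sum_i K 0 i * lam i j).
Definition phic K : 'M[R]_(m + m) := block_mx 0 (Dm K) (- Dm K) 0.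
Definition betac (v1 v2 : 'rV[R]_(m + m)) : 'rV[R]_r := \row_i dot (v1 *m phic 'e_i) v2.

Lemma Dm_lin a K L : Dm (a *: K + L) = a *: Dm K + Dm L.
Proof.
rewrite /Dm -linearP; congr diag_mx; apply/rowP => j; rewrite !mxE.
rewrite mulr_sumr -big_split; apply: eq_bigr => i _ /=; rewrite !mxE; ring.
Qed.
Lemma phic_lin a K L : phic (a *: K + L) = a *: phic K + phic L.
Proof.
by rewrite /phic scale_block_mx add_block_mx Dm_lin !scaler0 !addr0 scalerN opprD.
Qed.
Lemma Dm0 : Dm 0 = 0.
Proof. by have := Dm_lin 1 0 0; rewrite !scale1r addr0 => e; apply: (@addrI _ (Dm 0)); rewrite addr0 -e. Qed.
Lemma phic0 : phic 0 = 0.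
Proof. by rewrite /phic Dm0 oppr0 block_mx0. Qed.
Lemma phic_sum K : phic K = \sum_i K 0 i *: phic 'e_i.
Proof.
rewrite {1}(row_sum_delta K).
by elim/big_rec2: _ => [|i y1 y2 _ <-]; [exact: phic0 | exact: phic_lin].
Qed.

Lemma IcIc : Ic *m Ic = - 1%:M.
Proof.
rewrite /Ic mulmx_block ?mul0mx ?mulmx0 ?mul1mx ?mulmx1 ?mulNmx ?mulmxN ?mul1mx ?addr0 ?add0r.
by rewrite (scalar_mx_block m m) opp_block_mx ?oppr0.
Qed.
Lemma Ic_tr : Ic *m Ic^T = 1%:M.
Proof.
rewrite /Ic tr_block_mx ?trmx0 linearN /= ?trmx1 mulmx_block ?mul0mx ?mulmx0 ?mul1mx ?mulmx1.
by rewrite ?mulNmx ?mulmxN ?mul1mx ?mulmx1 ?addr0 ?add0r ?opprK (scalar_mx_block m m).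
Qed.
Lemma herm_c v w : dot (v *m Ic) (w *m Ic) = dot v w.
Proof. by rewrite /dot trmx_mul mulmxA -(mulmxA v) Ic_tr mulmx1. Qed.

Lemma phicIc K : phic K *m Ic = Ic *m phic K.
Proof.
rewrite /phic /Ic !mulmx_block ?mul0mx ?mulmx0 ?mulmx1 ?mul1mx ?mulNmx ?mulmxN ?mulmx1 ?mul1mx.
by rewrite ?addr0 ?add0r ?oppr0.
Qed.
Lemma phic_comm K L : phic K *m phic L = phic L *m phic K.
Proof.
rewrite /phic !mulmx_block ?mul0mx ?mulmx0 ?mulNmx ?mulmxN ?addr0 ?add0r.
by rewrite /Dm diag_mxC [diag_mx _ *m diag_mx _]diag_mxC.
Qed.
Lemma phic_tr K : (phic K)^T = - phic K.
Proof.
by rewrite /phic tr_block_mx ?trmx0 linearN /= /Dm tr_diag_mx opp_block_mx ?oppr0 ?opprK.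
Qed.
Lemma phic_skew K v w : dot (v *m phic K) w + dot v (w *m phic K) = 0.
Proof.
by rewrite /dot trmx_mul phic_tr mulNmx mulmxN mulmxA [(- (_ : 'M_1)) 0 0]mxE addrN.
Qed.
Lemma betac_ok v1 v2 K : dot (betac v1 v2) K = dot (v1 *m phic K) v2.
Proof.
have hd := @dot_ep R (m + m).
rewrite phic_sum mulmx_sumr (gsuml hd) {1}/dot mxE; apply: eq_bigr => i _.
by rewrite -scalemxAr (gZl hd) !mxE mulrC.
Qed.

Lemma Dm_e i : Dm 'e_i = diag_mx (\row_j lam i j).
Proof.
rewrite /Dm; congr diag_mx; apply/rowP => j; rewrite !mxE.
rewrite (bigD1 i) //= big1 ?addr0 => [|k /negPf nk]; rewrite !mxE ?eqxx ?mul1r //.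
by rewrite nk mul0r.
Qed.

Lemma notriv_c (W : {vspace 'rV[R]_(m + m)}) :
  (forall K w, w \in W -> w *m phic K = 0) -> W = 0%VS.
Proof.
move=> H; apply/eqP; rewrite -subv0; apply/subvP => w wW; rewrite memv0; apply/eqP.
have h i := H 'e_i w wW.
have ab : forall i j, lsubmx w 0 j * lam i j = 0 /\ rsubmx w 0 j * lam i j = 0.
  move=> i j; move: (h i); rewrite -[w in w *m _](hsubmxK w) /phic mul_row_block Dm_e.
  rewrite ?mulmx0 ?add0r ?addr0 mulmxN => /eqP; rewrite row_mx_eq0 oppr_eq0.
  case/andP => /eqP/rowP/(_ j) e1 /eqP/rowP/(_ j) e2.
  by move: e1 e2; rewrite !mul_mx_diag !mxE => -> ->.
have a0 j : lsubmx w 0 j = 0 /\ rsubmx w 0 j = 0.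
  have [i li] := hlam j; have [e1 e2] := ab i j.
  by move/eqP: e1; move/eqP: e2; rewrite !mulf_eq0 (negPf li) !orbF => /eqP -> /eqP ->.
rewrite -(hsubmxK w).
have -> : lsubmx w = 0 by apply/rowP => j; rewrite (a0 j).1 mxE.
have -> : rsubmx w = 0 by apply/rowP => j; rewrite (a0 j).2 mxE.
by rewrite row_mx0.
Qed.

Lemma knil_c : knil_data (fun _ _ : 'rV[R]_r => 0) (@dot R r) Ic (@dot R (m + m)) phic betac.
Proof.
split.
- split; first by split => *; rewrite ?scaler0 ?addr0.
    exact: dot_ep.
  by move=> *; rewrite /dot !mul0mx linear0 mulmx0 !mxE addr0.
- split; [exact: IcIc | exact: dot_ep | exact: herm_c].
- split; [exact: phic_lin | | exact: phicIc | exact: phic_skew].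
  by move=> K L v; rewrite phic0 mulmx0 -!mulmxA phic_comm subrr.
- by move=> W _; exact: notriv_c.
- exact: betac_ok.
Qed.
End Bwd2.

Section Bwd3.
Variables (R : realType) (r m : nat) (lam : 'I_r -> 'I_m -> R).

Lemma betacE v1 v2 i : betac lam v1 v2 0 i =
  \sum_j lam i j * (v1 0 (lshift m j) * v2 0 (rshift m j) - v1 0 (rshift m j) * v2 0 (lshift m j)).
Proof.
rewrite mxE /dot mxE big_split_ord /=.
have P : v1 *m phic lam 'e_i = row_mx (- (rsubmx v1 *m diag_mx (\row_j lam i j)))
                                      (lsubmx v1 *m diag_mx (\row_j lam i j)).
  rewrite -[v1 in LHS](hsubmxK v1) /phic mul_row_block Dm_e.
  by rewrite ?mulmx0 ?add0r ?addr0 mulmxN.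
rewrite P -big_split; apply: eq_bigr => j _ /=.
rewrite !mxE (unsplitK (inl _ j)) (unsplitK (inr _ j)) !mul_mx_diag !mxE; ring.
Qed.
Variables (L : vectType R) (br : L -> L -> L).
Hypothesis hbr : lie_bracket br.
Variables (z : 'I_r -> L) (x y : 'I_m -> L).
Hypothesis hB : basis_of fullv (X3 z x y).
Hypothesis hzz : forall i i', br (z i) (z i') = 0.
Hypothesis hzx : forall i j, [/\ br (z i) (x j) = 0, br (x j) (z i) = 0,
                         br (z i) (y j) = 0 & br (y j) (z i) = 0].
Hypothesis hxx : forall j j', br (x j) (x j') = 0 /\ br (y j) (y j') = 0.
Hypothesis hxy : forall j j', br (x j) (y j')
                      = if j == j' then \sum_(i < r) lam i j *: z i else 0.
Hypothesis hyx : forall j j', br (y j') (x j)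
                      = if j == j' then - \sum_(i < r) lam i j *: z i else 0.
Hypothesis hlam : forall j, exists i, lam i j != 0.

Definition fkf (K : 'rV[R]_r) : L := \sum_i K 0 i *: z i.
Definition fVf (v : 'rV[R]_(m + m)) : L :=
  \sum_j v 0 (lshift m j) *: x j + \sum_j v 0 (rshift m j) *: y j.

Lemma fkf_lin : linear fkf.
Proof.
move=> a K L'; rewrite /fkf scaler_sumr -big_split; apply: eq_bigr => i _ /=.
by rewrite !mxE scalerDl scalerA.
Qed.
Lemma fVf_lin : linear fVf.
Proof.
move=> a v w; rewrite /fVf.
have e (f : 'I_m -> 'I_(m + m)) (t : 'I_m -> L) :
    \sum_j (a *: v + w) 0 (f j) *: t j = a *: \sum_j v 0 (f j) *: t j + \sum_j w 0 (f j) *: t j.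
  by rewrite scaler_sumr -big_split; apply: eq_bigr => j _; rewrite !mxE scalerDl scalerA.
by rewrite !e scalerDr addrACA.
Qed.

Lemma hfE K v : fkf K + fVf v = comb3 z x y (fun i => K 0 i)
   (fun j => v 0 (lshift m j)) (fun j => v 0 (rshift m j)).
Proof. by rewrite /fkf /fVf /comb3 addrA. Qed.

Lemma comb3B a b c a' b' c' : comb3 z x y a b c - comb3 z x y a' b' c' =
  comb3 z x y (fun i => a i - a' i) (fun j => b j - b' j) (fun j => c j - c' j).
Proof.
rewrite /comb3 !opprD addrACA [X in X + _]addrACA.
by congr (_ + _ + _); rewrite -sumrB; apply: eq_bigr => i _; rewrite scalerBl.
Qed.

Lemma comb3_ext a b c a' b' c' : a =1 a' -> b =1 b' -> c =1 c' ->
  comb3 z x y a b c = comb3 z x y a' b' c'.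
Proof.
move=> ea eb ec; rewrite /comb3.
by congr (_ + _ + _); apply: eq_bigr => i _; rewrite ?ea ?eb ?ec.
Qed.

Lemma bwd : knilpotent_abelian br.
Proof.
have [sp fr] := proj1 (basis3 z x y) hB.
pose fk : {linear 'rV[R]_r -> L} := HB.pack fkf (GRing.isLinear.Build _ _ _ _ fkf fkf_lin).
pose fV : {linear 'rV[R]_(m + m) -> L} := HB.pack fVf (GRing.isLinear.Build _ _ _ _ fVf fVf_lin).
exists r, (m + m), (fun _ _ => 0), (@dot R r), (Ic R m), (@dot R (m + m)), (phic lam), (betac lam), fk, fV.
split.
- exact: knil_c.
- by [].
- have inj : injective (fun kv : 'rV[R]_r * 'rV[R]_(m + m) => fk kv.1 + fV kv.2).
    move=> [K1 v1] [K2 v2] /= e.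
    have e' : comb3 z x y (fun i => K1 0 i - K2 0 i)
        (fun j => v1 0 (lshift m j) - v2 0 (lshift m j))
        (fun j => v1 0 (rshift m j) - v2 0 (rshift m j)) = 0.
      rewrite -comb3B -(hfE K1 v1) -(hfE K2 v2).
      by move: e => /= ->; rewrite subrr.
    have [ha hb hc] := fr _ _ _ e'.
    congr pair; apply/rowP => k; first exact: subr0_eq (ha k).
    case: (splitP k) => [j ej|j ej].
      have -> : k = lshift m j by apply: val_inj.
      exact: subr0_eq (hb j).
    have -> : k = rshift m j by apply: val_inj.
    exact: subr0_eq (hc j).
  pose k l i := coord (T3 z x y) i l.
  pose g l := (\row_i k l (lshift _ i),
      row_mx (\row_j k l (rshift r (lshift m j))) (\row_j k l (rshift r (rshift m j)))).
  have hg : cancel g (fun kv : 'rV[R]_r * 'rV[R]_(m + m) => fk kv.1 + fV kv.2).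
    move=> l /=; rewrite hfE.
    have lT : l \in <<T3 z x y>>%VS by rewrite T3E; apply/span3; exact: sp.
    rewrite [RHS](coord_span lT) sumT3; apply: comb3_ext => i.
    + by rewrite mxE.
    + by rewrite row_mxEl mxE.
    + by rewrite row_mxEr mxE.
  by exists g => // kv; apply: inj; rewrite hg.
- move=> K1 v1 K2 v2; rewrite /= !hfE (br_comb hbr hzz hzx hxx hxy hyx).
  rewrite /fkf /S; under [RHS]eq_bigr do rewrite betacE scaler_suml.
  rewrite exchange_big /=; apply: eq_bigr => j _; rewrite scaler_sumr.
  by apply: eq_bigr => i _; rewrite scalerA mulrC.
Qed.
End Bwd3.

Unset Implicit Arguments.

Theorem proposition7p5 (R : realType) (L : vectType R) (br : L -> L -> L)
    (hbr : lie_bracket br) :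
  knilpotent_abelian br <->
  exists (r m : nat) (z : 'I_r -> L) (x y : 'I_m -> L) (lam : 'I_r -> 'I_m -> R),
    [/\ basis_of fullv ([seq z i | i <- enum 'I_r] ++ [seq x j | j <- enum 'I_m]
                         ++ [seq y j | j <- enum 'I_m]),
        [/\ (forall i i', br (z i) (z i') = 0),
        (forall i j, [/\ br (z i) (x j) = 0, br (x j) (z i) = 0,
                         br (z i) (y j) = 0 & br (y j) (z i) = 0]) &
        (forall j j', br (x j) (x j') = 0 /\ br (y j) (y j') = 0)],
        (forall j j', br (x j) (y j')
                      = if j == j' then \sum_(i < r) lam i j *: z i else 0),
        (forall j j', br (y j') (x j)
                      = if j == j' then - \sum_(i < r) lam i j *: z i else 0) &
        (forall j, exists i, lam i j != 0)].
Proof.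
split.
- case=> p [q [brk [gk [I [gV [phi [beta [fk [fV [hd hab bij hb]]]]]]]]]].
  exact: (fwd hd hab bij hb).
- case=> r [m [z [x [y [lam [hB [hzz hzx hxx] hxy hyx hlam]]]]]].
  exact: (bwd hbr hB hzz hzx hxx hxy hyx hlam).
Qed.
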